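(* Let $\zeta\in M^0$. If $u_k,u\in\mathrm{Conv}_{\mathrm{coe}}(\mathbb{R}^n)$ are such that $\delta^H_\zeta(u_k,u)\to 0$, then $u_k$ epi-converges to $u$ as $k\to\infty$.
   Context: $M^0$ is the set of continuous, strictly decreasing $\zeta:\mathbb{R}\to(0,\infty)$ with $\int_0^\infty\zeta(t)dt<\infty$. $\mathrm{Conv}_{\mathrm{coe}}(\mathbb{R}^n)$ is the set of proper, lower semicontinuous, convex, coercive functions $u:\mathbb{R}^n\to\mathbb{R}\cup\{+\infty\}$. With $\mathcal{K}^n$ the non-empty compact convex sets and $d_H$ the Hausdorff metric, define $\hat d_H$ on $\mathcal{K}^n\cup\{\emptyset\}$ by $\hat d_H(K,L)=d_H(K,L)$ if both non-empty, $\hat d_H(\emptyset,\emptyset)=0$, and $\hat d_H(K,\emptyset)=\hat d_H(\emptyset,K)=\max\{1,d_H(K,\{0\})\}$ for $K\ne\emptyset$. Then $\delta^H_\zeta(u,v)=\int_0^{\infty}\hat d_H(\{\zeta\circ u\ge s\},\{\zeta\circ v\ge s\})\,ds$, where $\{\zeta\circ u\ge s\}=\{x:\zeta(u(x))\ge s\}$ and $\zeta(+\infty):=0$. Epi-convergence $u_k\to u$: for every $x$, $\liminf_k u_k(x_k)\ge u(x)$ for all $x_k\to x$ and $\limsup_k u_k(x_k)\le u(x)$ for some $x_k\to x$. *)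

(* Defs.v *)
From HB Require Import structures.
From mathcomp Require Import all_boot all_order all_algebra.
From mathcomp Require Import all_classical all_reals all_analysis.
Set Implicit Arguments. Unset Strict Implicit. Unset Printing Implicit Defensive.
Import Order.TTheory GRing.Theory Num.Theory.
Import numFieldNormedType.Exports.
Local Open Scope classical_set_scope.
Local Open Scope ring_scope.

Section Defs.
Context {R : realType} {n : nat}.
Notation V := 'rV[R]_n.

Definition eucl_norm (x : V) : R := Num.sqrt (\sum_(i < n) x ord0 i ^+ 2).

(* distance from a point to a set (inf over the empty set is +oo) *)
Definition edist_pt (x : V) (L : set V) : \bar R :=
  ereal_inf [set (eucl_norm (x - y))%:E | y in L].

Definition hausdorff (K L : set V) : \bar R :=
  maxe (ereal_sup [set edist_pt x L | x in K])
       (ereal_sup [set edist_pt y K | y in L]).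

Definition hat_dH (K L : set V) : \bar R :=
  if `[< K = set0 >] then
    (if `[< L = set0 >] then 0%E else maxe 1%E (hausdorff L [set 0]))
  else if `[< L = set0 >] then maxe 1%E (hausdorff K [set 0])
  else hausdorff K L.

Definition M0 (zeta : R -> R) : Prop :=
  continuous zeta /\
  (forall s t : R, s < t -> zeta t < zeta s) /\
  (forall t : R, 0 < zeta t) /\
  (\int[lebesgue_measure]_(t in `[0%R, +oo[) (zeta t)%:E < +oo)%E.

(* zeta extended to R u {+oo} with zeta(+oo) := 0 (the value at -oo is
   irrelevant since proper functions never take the value -oo) *)
Definition zeta_ext (zeta : R -> R) (a : \bar R) : R :=
  match a with EFin r => zeta r | _ => 0 end.

Definition suplev (zeta : R -> R) (u : V -> \bar R) (s : R) : set V :=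
  [set x | s <= zeta_ext zeta (u x)].

Definition deltaH (zeta : R -> R) (u v : V -> \bar R) : \bar R :=
  (\int[lebesgue_measure]_(s in `[0%R, +oo[)
     hat_dH (suplev zeta u s) (suplev zeta v s))%E.

Definition proper_fun (u : V -> \bar R) : Prop :=
  (forall x, u x != -oo%E) /\ (exists x, u x != +oo%E).

Definition convex_fun (u : V -> \bar R) : Prop :=
  forall (x y : V) (l : R), 0 < l < 1 ->
    (u (l *: x + (1 - l) *: y)%R <= l%:E * u x + (1 - l)%:E * u y)%E.

Definition coercive (u : V -> \bar R) : Prop :=
  forall M : R, exists r : R, forall x, r < eucl_norm x -> (M%:E < u x)%E.

Definition Conv_coe (u : V -> \bar R) : Prop :=
  proper_fun u /\ lower_semicontinuous u /\ convex_fun u /\ coercive u.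

Definition epi_converges (uk : nat -> V -> \bar R) (u : V -> \bar R) : Prop :=
  forall x : V,
    (forall xk : nat -> V, xk @ \oo --> x ->
        (u x <= limn_einf (fun k => uk k (xk k)))%E) /\
    (exists2 xk : nat -> V, xk @ \oo --> x &
        (limn_esup (fun k => uk k (xk k)) <= u x)%E).

End Defs.

(* Main.v *)
Require Import Defs.
From HB Require Import structures.
From mathcomp Require Import all_boot all_order all_algebra.
From mathcomp Require Import all_classical all_reals all_analysis.
Import Order.TTheory GRing.Theory Num.Theory.
Import numFieldNormedType.Exports.
Local Open Scope classical_set_scope.
Local Open Scope ring_scope.
Import HBNNSimple.
Lemma int_lb (R : realType) (f : R -> \bar R) (a b eps : R) :
  (forall s, 0 <= s -> (0 <= f s)%E) -> 0 <= a -> a <= b -> 0 <= eps ->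
  (forall s, a <= s <= b -> (eps%:E <= f s)%E) ->
  ((eps * (b - a))%:E <= \int[lebesgue_measure]_(s in `[0%R, +oo[) f s)%E.
Proof.
move=> f0 a0 ab e0 fab.
rewrite ge0_integralE; last by move=> s /=; rewrite in_itv /= andbT; apply: f0.
have mI : @measurable _ (g_sigma_algebraType (R.-ocitv.-measurable)) (`[a, b]%classic : set R).
  exact: measurable_itv.
pose h := scale_nnsfun (indic_nnsfun R mI) e0.
apply: (@le_trans _ _ (sintegral lebesgue_measure h)); last first.
  apply: ereal_sup_ubound; exists h => // x.
  rewrite /h /= /patch /= measurable_realfun.mindicE.
  case: (boolP (x \in `[a, b]%classic)) => xab.
    have Hx : a <= x <= b by move: xab; rewrite inE /= in_itv.
    rewrite mulr1.
    have -> : x \in (`[0%R, +oo[%classic : set R).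
      by rewrite inE /= in_itv /= andbT; apply: le_trans a0 _; case/andP: Hx.
    exact: fab.
  rewrite mulr0; case: ifP => // /[!inE] /=; rewrite in_itv /= andbT; exact: f0.
rewrite /h sintegralrM sintegral_indic.
have L := @lebesgue_measure_itv R `[a, b].
rewrite /= in L.
rewrite /= [X in (_ * X)%E]L.
case: ifP => hab; first by rewrite -EFinD -EFinM.
have -> : b = a by apply/eqP; rewrite eq_le ab andbT leNgt -lte_fin hab.
by rewrite subrr mulr0 mule0.
Qed.
Section S.
Context {R : realType}.
Local Open Scope ereal_scope.

Lemma esup_le (u : (\bar R)^nat) (c : \bar R) :
  (\forall k \near \oo, u k <= c) -> limn_esup u <= c.
Proof.
move=> [N _ HN]; rewrite /limn_esup /limf_esup.
apply: ge_ereal_inf; exists (ereal_sup (u @` [set k | (N <= k)%N])).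
  by exists [set k | (N <= k)%N] => //; exists N.
by apply: ge_ereal_sup => _ [k Nk <-]; exact: HN.
Qed.

Lemma einf_ge (u : (\bar R)^nat) (t : R) :
  (\forall k \near \oo, t%:E <= u k) -> t%:E <= limn_einf u.
Proof.
move=> H; rewrite /limn_einf leeNr; apply: esup_le.
by near=> k; rewrite leeN2; near: k.
Unshelve. all: by end_near. Qed.

Lemma ereal_le_from (a b : \bar R) :
  (forall t1 t2 : R, (t1 < t2)%R -> t2%:E < a -> t1%:E <= b) -> a <= b.
Proof.
move=> H; case: a H => [s| |] H; last by rewrite leNye.
  apply/lee_subgt0Pr => e e0; apply: (H (s - e)%R (s - e / 2)%R).
    by rewrite ltrD2l ltrN2 ltr_pdivrMr // ltr_pMr // ltr1n.
  by rewrite lte_fin gtrDl oppr_lt0 divr_gt0.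
case: b H => [r| |] H //.
  have := H (r + 1)%R (r + 2)%R; rewrite ltrD2l ltr1n ltry => /(_ erefl erefl).
  by rewrite lee_fin gerDl ler10.
by have := H 0%R 1%R ltr01 (ltry _).
Qed.
End S.

Definition findj (Q : nat -> Prop) : nat -> nat :=
  fix f i := match i with 0 => 0%N | i'.+1 => if `[< Q i >] then i else f i' end.

Lemma findj_ge Q J i : Q J -> (J <= i)%N -> (J <= findj Q i)%N.
Proof.
move=> QJ; elim: i => [|i IH]; first by rewrite leqn0 => /eqP ->.
rewrite /=; case: ifP => // /asboolPn nQ.
rewrite leq_eqVlt => /orP [/eqP Ji|]; last exact: IH.
by rewrite Ji in QJ.
Qed.

Lemma findj_P Q i : Q 0%N -> Q (findj Q i).
Proof.
move=> Q0; elim: i => [|i IH] //=.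
by case: ifP => // /asboolP.
Qed.

Lemma small_inv (R : realType) (e : R) : 0 < e -> exists J : nat, J.+1%:R^-1 < e.
Proof.
move=> e0; exists (Num.Def.truncn e^-1).
rewrite invf_plt ?posrE ?ltr0Sn //; exact: truncnS_gt.
Qed.

Lemma inv_mono (R : realType) (J j : nat) : (J <= j)%N -> j.+1%:R^-1 <= J.+1%:R^-1 :> R.
Proof.
by move=> Jj; rewrite lef_pV2 ?posrE ?ltr0Sn // ler_nat ltnS.
Qed.

Section Main.
Context {R : realType} {n : nat}.
Notation V := 'rV[R]_n.
Lemma hat_ge1 (K L : set V) x (eps : R) : eps <= 1 -> K x ->
  (forall y, L y -> eps <= eucl_norm (x - y)) -> (eps%:E <= hat_dH K L)%E.
Proof.
move=> e1 Kx HL; rewrite /hat_dH.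
have -> : `[< K = set0 >] = false.
  by apply/asboolP => K0; rewrite K0 in Kx.
case: ifP => _.
  by rewrite le_max lee_fin e1.
rewrite /hausdorff le_max; apply/orP; left.
apply: le_trans (ereal_sup_ubound _); last by exists x.
by apply: le_ereal_inf_tmp => _ [y Ly <-]; rewrite lee_fin; exact: HL.
Qed.

Lemma hat_ge2 (K L : set V) y (eps : R) : eps <= 1 -> L y ->
  (forall x, K x -> eps <= eucl_norm (y - x)) -> (eps%:E <= hat_dH K L)%E.
Proof.
move=> e1 Ly HK; rewrite /hat_dH.
have -> : `[< L = set0 >] = false.
  by apply/asboolP => L0; rewrite L0 in Ly.
case: ifP => _.
  by rewrite le_max lee_fin e1.
rewrite /hausdorff le_max; apply/orP; right.
apply: le_trans (ereal_sup_ubound _); last by exists y.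
by apply: le_ereal_inf_tmp => _ [x Kx <-]; rewrite lee_fin; exact: HK.
Qed.

Lemma hat_ge0 (K L : set V) : (0 <= hat_dH K L)%E.
Proof.
rewrite /hat_dH; case: ifP => [_|/negbT/asboolPn/eqP/set0P [x Kx]].
  by case: ifP => _ //; rewrite le_max lee01.
case: ifP => _; first by rewrite le_max lee01.
rewrite /hausdorff le_max; apply/orP; left.
apply: le_trans (ereal_sup_ubound _); last by exists x.
apply: le_ereal_inf_tmp => _ [y Ly <-]; rewrite lee_fin; exact: sqrtr_ge0.
Qed.
Lemma norm_le_eucl (v : V) : `|v| <= eucl_norm v.
Proof.
change (mx_norm v <= eucl_norm v); rewrite mx_normrE.
apply: bigmax_le; first exact: sqrtr_ge0.
move=> [i j] _ /=.
rewrite (ord1 i) /eucl_norm -sqrtr_sqr.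
rewrite ler_sqrt; last by apply: sumr_ge0 => k _; exact: sqr_ge0.
rewrite (bigD1 j) //= lerDl; apply: sumr_ge0 => k _; exact: sqr_ge0.
Qed.

Lemma delta_small (f : nat -> \bar R) (c : R) : f @ \oo --> 0%E -> 0 < c ->
  \forall k \near \oo, (f k < c%:E)%E.
Proof.
move=> /fine_cvgP [fin cv] c0.
have := (cvgrPdist_lt _ _).1 cv c c0.
move=> H; near=> k.
have fk : f k \is a fin_num by near: k.
have : `|0 - fine (f k)| < c by near: k; exact: H.
rewrite -(fineK fk) lte_fin sub0r normrN => h.
exact: le_lt_trans (ler_norm _) h.
Unshelve. all: by end_near. Qed.

Lemma lsc_ball (u : V -> \bar R) x t : lower_semicontinuous u -> (t%:E < u x)%E ->
  exists2 r, 0 < r & forall y, `|x - y| < r -> (t%:E < u y)%E.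
Proof.
move=> lsc /lsc [W /nbhs_ballP [r r0 Wr] HW]; exists r => // y xy.
by apply: HW; apply: Wr; rewrite -ball_normE.
Qed.

Lemma zext_pos (zeta : R -> R) s a : (forall t, 0 < zeta t) -> 0 < s ->
  s <= zeta_ext zeta a -> exists r, a = r%:E /\ s <= zeta r.
Proof.
move=> zp s0; case: a => [r| |] /= h; first by exists r.
  by move: (lt_le_trans s0 h); rewrite ltxx.
by move: (lt_le_trans s0 h); rewrite ltxx.
Qed.

Lemma zle (zeta : R -> R) : (forall s t : R, s < t -> zeta t < zeta s) ->
  forall s t, s <= t -> zeta t <= zeta s.
Proof.
move=> zd s t; rewrite le_eqVlt => /orP [/eqP -> //|st].
exact/ltW/zd.
Qed.

Lemma zle_inv (zeta : R -> R) : (forall s t : R, s < t -> zeta t < zeta s) ->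
  forall s t, zeta t <= zeta s -> s <= t.
Proof.
move=> zd s t h; rewrite leNgt; apply/negP => st.
by move: (zd _ _ st); rewrite ltNge h.
Qed.

Lemma part1 (zeta : R -> R) (uk : nat -> V -> \bar R) (u : V -> \bar R) x
  (xk : nat -> V) (t1 t2 : R) :
  M0 zeta -> (forall k, proper_fun (uk k)) -> lower_semicontinuous u ->
  (fun k => deltaH zeta (uk k) u) @ \oo --> 0%E -> xk @ \oo --> x ->
  t1 < t2 -> (t2%:E < u x)%E ->
  \forall k \near \oo, (t1%:E < uk k (xk k))%E.
Proof.
move=> [_ [zdec [zpos _]]] prop lsc hd hx t12 t2u.
have [r r0 hr] := @lsc_ball u x t2 lsc t2u.
pose eps := Num.min (r / 2) 1.
have r20 : 0 < r / 2 by rewrite divr_gt0.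
have eps0 : 0 < eps by rewrite lt_min r20 ltr01.
have zd : 0 < zeta t1 - zeta t2 by rewrite subr_gt0 zdec.
have c0 : 0 < eps * (zeta t1 - zeta t2) by rewrite mulr_gt0.
have Hd := delta_small (fun k => deltaH zeta (uk k) u) _ hd c0.
have Hx := (cvgrPdist_lt _ _).1 hx (r / 2) r20.
apply: contrapT => Hn.
have [k [[dk xkk] nk]] : exists k, ((deltaH zeta (uk k) u < (eps * (zeta t1 - zeta t2))%:E)%E
     /\ `|x - xk k| < r / 2) /\ ~ (t1%:E < uk k (xk k))%E.
  apply: contrapT => H; apply: Hn; near=> k; apply: contrapT => nk; apply: H.
  exists k; split => //; split; [near: k; exact: Hd|near: k; exact: Hx].
move: dk; apply/negP; rewrite -leNgt /deltaH.
apply: int_lb.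
- by move=> s _; exact: hat_ge0.
- exact/ltW.
- exact/ltW/zdec.
- exact/ltW.
move=> s /andP [hs sb].
have s0 : 0 < s := lt_le_trans (zpos t2) hs.
apply: (@hat_ge1 _ _ (xk k)).
- by rewrite ge_min lexx orbT.
- rewrite /suplev /=.
  case E: (uk k (xk k)) => [r'| |].
  + rewrite /= (le_trans sb) // (zle _ zdec) //.
    by move: nk; rewrite E lte_fin => /negP; rewrite -leNgt.
  + by move: nk; rewrite E ltry.
  + by move: ((prop k).1 (xk k)); rewrite E.
move=> y; rewrite /suplev /= => sy.
have [r'' [uy sr]] := @zext_pos zeta s _ zpos s0 sy.
have r2 : r'' <= t2 by apply: (zle_inv _ zdec); apply: le_trans hs sr.
have xy : r <= `|x - y|.
  rewrite leNgt; apply/negP => /hr; rewrite uy lte_fin => /lt_le_trans/(_ r2).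
  by rewrite ltxx.
have h1 := ler_distD (xk k) x y.
apply: le_trans (norm_le_eucl _).
apply: (@le_trans _ _ (r / 2)); first by rewrite ge_min lexx.
have : r <= r / 2 + `|xk k - y| by apply: le_trans xy (le_trans h1 _); rewrite lerD2r ltW.
by rewrite -lerBlDl {1}(splitr r) addrK.
Unshelve. all: by end_near. Qed.

Lemma part2 (zeta : R -> R) (uk : nat -> V -> \bar R) (u : V -> \bar R) x
  (t0 t e : R) :
  M0 zeta ->
  (fun k => deltaH zeta (uk k) u) @ \oo --> 0%E ->
  u x = t0%:E -> t0 < t -> 0 < e ->
  \forall k \near \oo, exists y, (uk k y <= t%:E)%E /\ `|x - y| < e.
Proof.
move=> [_ [zdec [zpos _]]] hd ux t0t e0.
pose eps := Num.min e 1.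
have eps0 : 0 < eps by rewrite lt_min e0 ltr01.
have zd : 0 < zeta t0 - zeta t by rewrite subr_gt0 zdec.
have c0 : 0 < eps * (zeta t0 - zeta t) by rewrite mulr_gt0.
have Hd := delta_small (fun k => deltaH zeta (uk k) u) _ hd c0.
apply: contrapT => Hn.
have [k [dk nk]] : exists k, (deltaH zeta (uk k) u < (eps * (zeta t0 - zeta t))%:E)%E
     /\ ~ exists y, (uk k y <= t%:E)%E /\ `|x - y| < e.
  apply: contrapT => H; apply: Hn; near=> k; apply: contrapT => nk; apply: H.
  by exists k; split => //; near: k; exact: Hd.
move: dk; apply/negP; rewrite -leNgt /deltaH.
apply: int_lb.
- by move=> s _; exact: hat_ge0.
- exact/ltW.
- exact/ltW/zdec.
- exact/ltW.
move=> s /andP [hs sb].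
have s0 : 0 < s := lt_le_trans (zpos t) hs.
apply: (@hat_ge2 _ _ x).
- by rewrite ge_min lexx orbT.
- by rewrite /suplev /= ux.
move=> y; rewrite /suplev /= => sy.
have [r'' [uy sr]] := @zext_pos zeta s _ zpos s0 sy.
have r2 : r'' <= t by apply: (zle_inv _ zdec); apply: le_trans hs sr.
have xy : e <= `|x - y|.
  rewrite leNgt; apply/negP => xy; apply: nk; exists y; split => //.
  by rewrite uy lee_fin.
apply: le_trans (norm_le_eucl _).
by apply: le_trans xy; rewrite ge_min lexx.
Unshelve. all: by end_near. Qed.

End Main.

Theorem proposition5p9 (R : realType) (n : nat) (zeta : R -> R)
  (uk : nat -> 'rV[R]_n -> \bar R) (u : 'rV[R]_n -> \bar R) :
  M0 zeta ->
  (forall k, Conv_coe (uk k)) -> Conv_coe u ->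
  (fun k => deltaH zeta (uk k) u) @ \oo --> 0%E ->
  epi_converges uk u.
Proof.
move=> hz hk hu hd x; split.
  move=> xk hx; apply: ereal_le_from => t1 t2 t12 t2u.
  apply: einf_ge.
  have := @part1 R n zeta uk u x xk t1 t2 hz (fun k => (hk k).1) hu.2.1 hd hx t12 t2u.
  by apply: filterS => k /ltW.
case E: (u x) => [t0| |]; last first.
- by move: (hu.1.1 x); rewrite E.
- by exists (fun=> x); [exact: cvg_cst | rewrite leey].
pose Q k j := exists y, (uk k y <= (t0 + j.+1%:R^-1)%:E)%E /\ `|x - y| < j.+1%:R^-1.
have H2 j : \forall k \near \oo, Q k j.
  apply: (@part2 R n zeta uk u x t0 _ _ hz hd E); first by rewrite ltrDl invr_gt0 ltr0Sn.
  by rewrite invr_gt0 ltr0Sn.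
pose jk k := findj (Q k) k.
pose xs k := match pselect (Q k (jk k)) with
  | left h => projT1 (cid h) | right _ => x end.
have Hxs : \forall k \near \oo, (uk k (xs k) <= (t0 + (jk k).+1%:R^-1)%:E)%E
    /\ `|x - xs k| < (jk k).+1%:R^-1.
  near=> k.
  have q0 : Q k 0%N by near: k; exact: H2.
  rewrite /xs; case: pselect => [h|]; first exact: projT2 (cid h).
  by move=> nq; exfalso; apply: nq; exact: (@findj_P (Q k) k q0).

have Hj J : \forall k \near \oo, (J <= jk k)%N.
  near=> k; apply: findj_ge; first by near: k; exact: H2.
  by near: k; exists J.
exists xs.
  apply/cvgrPdist_lt => e e0.
  have [J hJ] := @small_inv R e e0.
  near=> k.
  have [_ h] : (uk k (xs k) <= (t0 + (jk k).+1%:R^-1)%:E)%E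
    /\ `|x - xs k| < (jk k).+1%:R^-1 by near: k.
  apply: (lt_le_trans h); apply: (le_trans _ (ltW hJ)); apply: inv_mono.
  by near: k; exact: Hj.
apply/lee_addgt0Pr => e e0.
have [J hJ] := @small_inv R e e0.
apply: esup_le; near=> k.
have [h _] : (uk k (xs k) <= (t0 + (jk k).+1%:R^-1)%:E)%E
  /\ `|x - xs k| < (jk k).+1%:R^-1 by near: k.
apply: (le_trans h); rewrite -EFinD lee_fin lerD2l.
apply: (le_trans _ (ltW hJ)); apply: inv_mono.
by near: k; exact: Hj.
Unshelve. all: by end_near. Qed.
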